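(* Assume the setting, algorithm $\mathrm{ALG}$ and linear program described in the context. For every $\varepsilon>0$ and every integer horizon $H\ge \max_{p\in\Pi} r_p$, $$\mathrm{ALG}\;\le\; 2\Big(\frac{2}{\varepsilon}+1\Big)\cdot \mathrm{val}(\mathcal P_{\varepsilon,H}).$$ That is, $\mathrm{ALG}$ running at unit speed is $2(2/\varepsilon+1)$-competitive against the (LP relaxation of the) optimal offline preemptive, migratory solution whose reconfigurable transmissions run at speed $1/(2+\varepsilon)$ (equivalently, $\mathrm{ALG}$ has speedup $2+\varepsilon$).
   Context: Network. $S,T,R,D$ are pairwise disjoint finite sets (sources, transmitters, receivers, destinations). Each transmitter $t\in T$ is attached to a source $s(t)\in S$ via a link of integer delay $d(s(t),t)\ge 0$; each receiver $r\in R$ is attached to a destination $d(r)\in D$ via a link of integer delay $d(r,d(r))\ge 0$. A set $E_R\subseteq T\times R$ of reconfigurable edges is given, each $e\in E_R$ with integer delay $d(e)\ge 1$ (sending an amount $s$ through $e$ takes time $s\cdot d(e)$). A set $E_\ell\subseteq S\times D$ of fixed links is given, each with integer delay $d(\cdot,\cdot)\ge0$. For $e=(t,r)\in E_R$ put $\Delta(e)=d(s(t),t)+d(e)+d(r,d(r))$. Two edges of $E_R$ are adjacent if they share a transmitter or a receiver (an edge is adjacent to itself). Packets. $\Pi$ is a finite set of unit-size packets; packet $p$ has weight $w_p>0$, release time $r_p\in\mathbb Z_{\ge1}$, source $s_p\in S$, destination $d_p\in D$. Let $E(p)=\{(t,r)\in E_R: s(t)=s_p,\ d(r)=d_p\}$;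 assume $E(p)\neq\emptyset$ for all $p$. $\Pi_\ell$ is the set of packets with $(s_p,d_p)\in E_\ell$, and for such $p$, $\ell_p:=d(s_p,d_p)$. Fix a total order $\prec$ on $\Pi$ with $r_p<r_q\Rightarrow p\prec q$ (''$p$ arrived before $q$''). Algorithm ALG. Packets are processed one by one in the order $\prec$; packet $p$ is processed at time $r_p$, before the transmission step $r_p$. A packet assigned to a reconfigurable edge $e$ is split into $d(e)$ chunks, each of size $1/d(e)$ and weight $w_p/d(e)$, all assigned to $e$; for a chunk $c$, $p(c)$ is its packet, $w_c$ its weight, $e(c)$ its edge. A chunk is pending until it is transmitted. For a set $C$ of chunks, $W(C)$ is its total weight. When $p$ is processed, let $B(p)$ be the set of pending chunks of packets $p'\prec p$. For $e=(t,r)\in E(p)$ let $\mathrm{Adj}(p,e)$ be the chunks of $B(p)$ whose edge is adjacent to $e$, $H(p,e)=\{c\in \mathrm{Adj}(p,e): w_c\ge w_p/d(e)\}$, $L(p,e)=\mathrm{Adj}(p,e)\setminus H(p,e)$, and $$\mathrm{imp}(p,e)=w_p\Big(d(s_p,t)+\tfrac{d(e)+1}{2}+d(r,d_p)\Big)+w_p\,|H(p,e)|+d(e)\,W(L(p,e)).$$ Let $e^*\in\arg\min_{e\in E(p)}\mathrm{imp}(p,e)$. If $p\in\Pi_\ell$ and $w_p\ell_p\le \mathrm{imp}(p,e^* )$, $p$ is sent over its fixed link (latency $w_p\ell_p$); otherwise $p$ is assigned to $e(p):=e^*$ and split into chunks. Scheduler: at each integer time $\tau\ge1$ (after processing the packets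 released at $\tau$), build $M_\tau$ greedily: start with $M_\tau=\emptyset$ and go through all pending chunks in order of decreasing weight, ties broken by $\prec$ on their packets (ties among chunks of the same packet arbitrary), adding a chunk $c$ to $M_\tau$ iff no chunk already in $M_\tau$ has an edge adjacent to $e(c)$. The chunks of $M_\tau$ are transmitted at step $\tau$ (and cease to be pending). If chunk $c$ of $p$ is transmitted at step $\tau_c$ via $e(p)=(t,r)$, its completion time is $f_c=\tau_c+1+d(s_p,t)+d(r,d_p)$, and $c$ is active at integer times $\tau$ with $r_p\le\tau<f_c$. The cost is $\mathrm{ALG}=\sum_{p\text{ sent on fixed link}}w_p\ell_p+\sum_{\text{chunks }c}w_c\,(f_c-r_{p(c)})$. Linear program. For $\varepsilon>0$ and integer $H\ge\max_p r_p$, $\mathcal P_{\varepsilon,H}$ has variables $x_{p,e,\tau}\ge0$ ($p\in\Pi$, $e\in E(p)$, $\tau\in\{r_p,\dots,H\}$) and $y_p\ge0$ ($p\in\Pi_\ell$): minimize $\sum_{p}\sum_{e\in E(p)}\sum_{\tau} w_p x_{p,e,\tau}(\tau+\Delta(e)-r_p)+\sum_{p\in\Pi_\ell}w_p\ell_p y_p$ subject to $\sum_{e,\tau}x_{p,e,\tau}+y_p\ge1$ for $p\in\Pi_\ell$; $\sum_{e,\tau}x_{p,e,\tau}\ge1$ for $p\notin\Pi_\ell$; for every $\tau$ and $t\in T$: $\sum_{r}\sum_{p: r_p\le\tau,(t,r)\in E(p)}d(t,r)\,x_{p,(t,r),\tau}\le\frac1{2+\varepsilon}$; for every $\tau$ and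 $r\in R$: $\sum_{t}\sum_{p:r_p\le\tau,(t,r)\in E(p)}d(t,r)\,x_{p,(t,r),\tau}\le\frac1{2+\varepsilon}$. $\mathrm{val}(\mathcal P_{\varepsilon,H})$ denotes its optimal value ($+\infty$ if infeasible). *)

(* Defs.v *)
From HB Require Import structures.
From mathcomp Require Import all_boot all_order all_algebra.
From mathcomp Require Import boolp classical_sets reals constructive_ereal ereal.
Set Implicit Arguments. Unset Strict Implicit. Unset Printing Implicit Defensive.
Import Order.TTheory GRing.Theory Num.Theory.
Local Open Scope ring_scope.

(* S sources, T transmitters, Rv receivers, D destinations, P packets *)
Record network (R : realType) (S T Rv D P : finType) := Network {
  srcT : T -> S;
  dST  : T -> nat;           (* d(s(t),t) *)
  dstR : Rv -> D;
  dRD  : Rv -> nat;          (* d(r,d(r)) *)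
  ER   : {set T * Rv};       (* reconfigurable edges *)
  dE   : T * Rv -> nat;
  El   : {set S * D};        (* fixed links *)
  dl   : S * D -> nat;       (* delay of a fixed link *)
  wt   : P -> R;
  rls  : P -> nat;
  psrc : P -> S;
  pdst : P -> D;
  rk   : P -> nat            (* p < q  iff  rk p < rk q  (the total order "prec") *)
}.

Section Defs.
Variables (R : realType) (S T Rv D P : finType) (N : network R S T Rv D P).

Definition Ep (p : P) : {set T * Rv} :=
  [set e in ER N | (srcT N e.1 == psrc N p) && (dstR N e.2 == pdst N p)].

Definition inPl (p : P) : bool := (psrc N p, pdst N p) \in El N.
Definition ellp (p : P) : nat := dl N (psrc N p, pdst N p).

Definition Delta (e : T * Rv) : nat := dST N e.1 + dE N e + dRD N e.2.

Definition valid_network : Prop :=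
  [/\ (forall e, e \in ER N -> (1 <= dE N e)%N),
      (forall p, 0 < wt N p),
      (forall p, (1 <= rls N p)%N),
      (forall p, exists e, e \in Ep p) &
      (injective (rk N) /\
       (forall p q, (rls N p < rls N q)%N -> (rk N p < rk N q)%N))].

Definition adjacent (e e' : T * Rv) : bool := (e.1 == e'.1) || (e.2 == e'.2).

(* A run of ALG: the decision for every packet (None = fixed link,    *)
(* Some e = assigned to reconfigurable edge e) and the transmission   *)
(* step tx p k of the k-th chunk (k < d(e(p))) of packet p.           *)
Record run := Run { dec : P -> option (T * Rv); tx : P -> nat -> nat }.

Variable A : run.

Definition nch (p : P) : nat :=
  if dec A p is Some e then dE N e else 0%N.

Definition cw (p : P) : R := wt N p / (nch p)%:R.

Definition adj_dec (p : P) (e : T * Rv) : bool :=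
  if dec A p is Some e' then adjacent e' e else false.

Definition chunk_before (p' : P) (k' : nat) (p : P) (k : nat) : bool :=
  (cw p < cw p') ||
  ((cw p' == cw p) && ((rk N p' < rk N p)%N || ((p' == p) && (k' < k)%N))).

(* B(p): pending chunks (p',k') of packets p' prec p at the processing time
   r_p of p (before transmission step r_p). |H(p,e)| and W(L(p,e)). *)
Definition Hcount (p : P) (e : T * Rv) : nat :=
  \sum_(p' | (rk N p' < rk N p)%N) \sum_(k < nch p')
     (if [&& (rls N p <= tx A p' k)%N, adj_dec p' e
            & wt N p / (dE N e)%:R <= cw p' :> R] then 1%N else 0%N).

Definition WL (p : P) (e : T * Rv) : R :=
  \sum_(p' | (rk N p' < rk N p)%N) \sum_(k < nch p')
     (if [&& (rls N p <= tx A p' k)%N, adj_dec p' e & cw p' < wt N p / (dE N e)%:R]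
      then cw p' else 0).

Definition imp (p : P) (e : T * Rv) : R :=
  wt N p * ((dST N e.1)%:R + ((dE N e)%:R + 1) / 2 + (dRD N e.2)%:R)
  + wt N p * (Hcount p e)%:R + (dE N e)%:R * WL p e.

Definition dec_ok (p : P) : Prop :=
  match dec A p with
  | None => exists e, [/\ e \in Ep p, (forall e', e' \in Ep p -> imp p e <= imp p e'),
                         inPl p & wt N p * (ellp p)%:R <= imp p e]
  | Some e => [/\ e \in Ep p, (forall e', e' \in Ep p -> imp p e <= imp p e') &
                 ~ (inPl p /\ wt N p * (ellp p)%:R <= imp p e)]
  end.

(* Greedy scheduler: chunk (p,k) is pending at steps rls p .. tx p k;
   at every step tau at which it is pending it belongs to M_tau (i.e. it is
   transmitted, tau = tx p k) iff no chunk earlier in the scheduler order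
   that belongs to M_tau (transmitted at tau) has an edge adjacent to e(p). *)
Definition sched_ok : Prop :=
  forall p e, dec A p = Some e -> forall k, (k < dE N e)%N ->
    (rls N p <= tx A p k)%N /\
    forall tau, (rls N p <= tau <= tx A p k)%N ->
      (tx A p k = tau <->
       ~ exists p' e' k', [/\ dec A p' = Some e', (k' < dE N e')%N,
                             tx A p' k' = tau, chunk_before p' k' p k & adjacent e' e]).

Definition is_ALG_run : Prop := (forall p, dec_ok p) /\ sched_ok.

Definition fin (p : P) (k : nat) : nat :=
  if dec A p is Some e then (tx A p k + 1 + dST N e.1 + dRD N e.2)%N else 0%N.

Definition ALGcost : R :=
  \sum_(p | dec A p == None) wt N p * (ellp p)%:R
  + \sum_p \sum_(k < nch p) cw p * ((fin p k)%:R - (rls N p)%:R).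

End Defs.

Section LP.
Variables (R : realType) (S T Rv D P : finType) (N : network R S T Rv D P).
Variables (eps : R) (H : nat).

(* variables x_{p,e,tau} (e in E(p), rls p <= tau <= H) and y_p (p in Pi_ell) *)
Definition sumx (x : P -> T * Rv -> nat -> R) (p : P) : R :=
  \sum_(e in Ep N p) \sum_(rls N p <= tau < H.+1) x p e tau.

Definition LPobj (x : P -> T * Rv -> nat -> R) (y : P -> R) : R :=
  \sum_p \sum_(e in Ep N p) \sum_(rls N p <= tau < H.+1)
      wt N p * x p e tau * ((tau + Delta N e)%:R - (rls N p)%:R)
  + \sum_(p | inPl N p) wt N p * (ellp N p)%:R * y p.

Definition LPfeasible (x : P -> T * Rv -> nat -> R) (y : P -> R) : Prop :=
  [/\ (forall p e tau, e \in Ep N p -> (rls N p <= tau <= H)%N -> 0 <= x p e tau),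
      (forall p, inPl N p -> 0 <= y p),
      (forall p, inPl N p -> 1 <= sumx x p + y p),
      (forall p, ~~ inPl N p -> 1 <= sumx x p) &
      (forall tau (t : T), (tau <= H)%N ->
         \sum_(rv : Rv) \sum_(p | (rls N p <= tau)%N && ((t, rv) \in Ep N p))
            (dE N (t, rv))%:R * x p (t, rv) tau <= 1 / (2 + eps)) /\
      (forall tau (rv : Rv), (tau <= H)%N ->
         \sum_(t : T) \sum_(p | (rls N p <= tau)%N && ((t, rv) \in Ep N p))
            (dE N (t, rv))%:R * x p (t, rv) tau <= 1 / (2 + eps))].

(* val(P_{eps,H}): infimum of the objective over feasible points (+oo if none) *)
Definition LPval : \bar R :=
  ereal_inf [set z : \bar R | exists x y, LPfeasible x y /\ z = (LPobj x y)%:E].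

End LP.

(* Main.v *)
Require Import Defs.
From HB Require Import structures.
From mathcomp Require Import all_boot all_order all_algebra.
From mathcomp Require Import boolp classical_sets reals constructive_ereal ereal.
From mathcomp Require Import zify ring lra.
Set Implicit Arguments. Unset Strict Implicit. Unset Printing Implicit Defensive.
Import Order.TTheory GRing.Theory Num.Theory.
Local Open Scope ring_scope.

Lemma sum_nat_eq1 (m n a : nat) :
  (\sum_(m <= i < n) (a == i) = (m <= a < n))%N.
Proof.
elim: n => [|n IH]; first by rewrite big_geq //; lia.
case: (leqP m n)%N => hmn.
  rewrite big_nat_recr //= IH.
  case: (eqVneq a n) => [->|hn] /=; lia.
rewrite big_geq //; lia.
Qed.

Lemma sum_count_le (r x n : nat) :
  (\sum_(i < n) (r <= i <= x) <= x.+1 - r)%N.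
Proof.
have: (\sum_(i < n) (r <= i <= x) = minn n x.+1 - r)%N.
  elim: n => [|n IH]; first by rewrite big_ord0; lia.
  rewrite big_ord_recr /= IH.
  case: (leqP r n)%N => h1; case: (leqP n x)%N => h2 /=; lia.
move=> ->; lia.
Qed.

Lemma sum_ltk (K k : nat) : (\sum_(j < K) (j < k) = minn K k)%N.
Proof.
elim: K => [|K IH]; first by rewrite big_ord0; lia.
rewrite big_ord_recr /= IH; case: (ltnP K k)%N => h /=; lia.
Qed.

Lemma sum_natr_id (R : realType) (n : nat) :
  (\sum_(k < n) (k%:R : R)) * 2 = n%:R * (n%:R - 1).
Proof.
elim: n => [|n IH]; first by rewrite big_ord0 !mul0r.
rewrite big_ord_recr /= mulrDl IH -natr1; ring.
Qed.

Section Main.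
Variables (R : realType) (S T Rv D P : finType) (N : network R S T Rv D P) (A : run T Rv P).
Hypothesis hv : valid_network N.
Hypothesis hA : is_ALG_run N A.
Variable e0 : T * Rv.

Definition K := (\max_(p : P) nch N A p)%N.
Definition C := (P * 'I_K)%type.
Definition valid (c : C) := (c.2 < nch N A c.1)%N.
Definition txc (c : C) := tx A c.1 c.2.
Definition ed (p : P) := odflt e0 (dec A p).
Definition on1 p t := if dec A p is Some e then e.1 == t else false.
Definition on2 p r := if dec A p is Some e then e.2 == r else false.

Lemma sumC (U : Type) (idx : U) (op : Monoid.com_law idx) (Q : pred P) (F : P -> nat -> U) :
  \big[op/idx]_(p | Q p) \big[op/idx]_(k < nch N A p) F p k =
  \big[op/idx]_(c : C | Q c.1 && valid c) F c.1 c.2.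
Proof.
rewrite (eq_bigr (fun p => \big[op/idx]_(k < K | (k < nch N A p)%N) F p k)).
  by rewrite pair_big_dep.
by move=> p _; rewrite (big_ord_widen K (F p)) // /K leq_bigmax.
Qed.

Lemma nchE p e : dec A p = Some e -> nch N A p = dE N e.
Proof. by rewrite /nch => ->. Qed.

Lemma validSome c : valid c -> dec A c.1 = Some (ed c.1).
Proof. by rewrite /valid /nch /ed; case: (dec A c.1). Qed.

Lemma dec_in p e : dec A p = Some e -> e \in Ep N p.
Proof. by case: hA => /(_ p) + _; rewrite /dec_ok => + h; rewrite h => -[]. Qed.

Lemma dE_pos p e : e \in Ep N p -> (1 <= dE N e)%N.
Proof.
case: hv => h _ _ _ _; rewrite /Ep inE => /andP [he _]; exact: h.
Qed.

Lemma cw_eq p e : dec A p = Some e -> cw N A p = wt N p / (dE N e)%:R.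
Proof. by move=> h; rewrite /cw (nchE h). Qed.

Lemma wt_gt0 p : 0 < wt N p.
Proof. by case: hv => _ h _ _ _. Qed.

Lemma cw_ge0 p : 0 <= cw N A p.
Proof. by rewrite /cw divr_ge0 // ltW // wt_gt0. Qed.

Lemma valid_sched c : valid c ->
  (rls N c.1 <= txc c)%N /\
    forall tau, (rls N c.1 <= tau <= txc c)%N ->
      (txc c = tau <->
       ~ exists p' e' k', [/\ dec A p' = Some e', (k' < dE N e')%N,
                             tx A p' k' = tau, chunk_before N A p' k' c.1 c.2 &
                             adjacent e' (ed c.1)]).
Proof.
move=> hc; have hs := validSome hc.
case: hA => _ /(_ c.1 (ed c.1) hs c.2); apply.
by move: hc; rewrite /valid (nchE hs).
Qed.

Lemma adjC (e e' : T * Rv) : adjacent e e' = adjacent e' e.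
Proof. by rewrite /adjacent eq_sym [e.2 == _]eq_sym. Qed.

Lemma rk_inj : injective (rk N).
Proof. by case: hv => _ _ _ _ []. Qed.

Lemma rk_rls p q : (rk N p < rk N q)%N -> (rls N p <= rls N q)%N.
Proof.
case: hv => _ _ _ _ [_ h] hpq; rewrite leqNgt; apply/negP => /h; lia.
Qed.

Lemma cb_total (c1 c2 : C) : c1 != c2 ->
  chunk_before N A c1.1 c1.2 c2.1 c2.2 || chunk_before N A c2.1 c2.2 c1.1 c1.2.
Proof.
case: c1 c2 => [p1 k1] [p2 k2] /= hne; rewrite /chunk_before.
case: (ltgtP (cw N A p2) (cw N A p1)) => //= heq.
case: (eqVneq p1 p2) => [e|hp].
  subst p2; rewrite ltnn /=.
  have hk : k1 != k2 by apply: contraNneq hne => ->.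
  by case: (ltngtP k1 k2) => // /val_inj e; rewrite e eqxx in hk.
have : rk N p1 != rk N p2 by apply: contra hp => /eqP /rk_inj ->.
by rewrite !andFb !orbF; case: (ltngtP (rk N p1) (rk N p2)).
Qed.

Lemma no_two (c1 c2 : C) : valid c1 -> valid c2 -> txc c1 = txc c2 ->
  adjacent (ed c1.1) (ed c2.1) -> c1 = c2.
Proof.
move=> v1 v2 ht hadj; apply/eqP; apply/negPn/negP => hne.
have h := cb_total hne.
wlog: c1 c2 v1 v2 ht hadj hne h / chunk_before N A c1.1 c1.2 c2.1 c2.2.
  move=> W; case/orP: (h) => hb; first exact: (W c1 c2 v1 v2 ht hadj hne h hb).
  apply: (W c2 c1 v2 v1 (esym ht)) => //; first by rewrite adjC.
    by rewrite eq_sym.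
  by rewrite orbC.
move=> hb; case: (valid_sched v2) => hr hall.
have [h1 _] := hall (txc c2) (introT andP (conj hr (leqnn _))).
apply: (h1 erefl).
have hs1 := validSome v1.
exists c1.1, (ed c1.1), (nat_of_ord c1.2); split.
- exact: hs1.
- by move: v1; rewrite /valid (nchE hs1).
- exact: ht.
- exact: hb.
- exact: hadj.
Qed.


Definition blk (c' c : C) : bool :=
  [&& (rls N c.1 <= txc c')%N, (txc c' < txc c)%N, adj_dec A c'.1 (ed c.1)
    & chunk_before N A c'.1 c'.2 c.1 c.2].

Lemma waitB c : valid c -> (txc c - rls N c.1 <= \sum_(c' : C | valid c') blk c' c)%N.
Proof.
move=> hc; have [hr hall] := valid_sched hc.
have e1 : (txc c - rls N c.1 = \sum_(rls N c.1 <= tau < txc c) 1)%N.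
  by rewrite sum_nat_const_nat muln1.
rewrite e1.
apply: (@leq_trans (\sum_(rls N c.1 <= tau < txc c)
                     \sum_(c' : C | valid c') ((txc c' == tau) && blk c' c))%N).
  rewrite big_nat [X in (_ <= X)%N]big_nat; apply: leq_sum => tau /andP [h1 h2].
  have hne : txc c <> tau by move=> e; rewrite e ltnn in h2.
  have [hex|hnex] := boolp.pselect (exists p' e' k', [/\ dec A p' = Some e', (k' < dE N e')%N,
                             tx A p' k' = tau, chunk_before N A p' k' c.1 c.2 &
                             adjacent e' (ed c.1)]); last first.
    by exfalso; apply: hne; apply/(hall tau); [rewrite h1 ltnW | ].
  case: hex => p' [e' [k' [hd hk ht hb ha]]].
  have hkK : (k' < K)%N.
    by apply: (leq_trans hk); rewrite -(nchE hd) /K leq_bigmax.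
  pose c' : C := (p', Ordinal hkK).
  have vc' : valid c' by rewrite /valid /= (nchE hd).
  rewrite (bigD1 c') //= ; apply: leq_trans (leq_addr _ _).
  rewrite /txc /= ht eqxx /blk /txc /= ht h1 h2 /adj_dec hd ha hb.
  done.
rewrite exchange_big /=; apply: leq_sum => c' _.
case hbk: (blk c' c).
  rewrite (eq_bigr (fun tau => (txc c' == tau) : nat)); last by move=> i _; rewrite andbT.
  rewrite sum_nat_eq1; move: hbk; rewrite /blk => /and4P [-> -> _ _]; done.
by rewrite big1 // => i _; rewrite andbF.
Qed.


Lemma cb_le p' k' p k : chunk_before N A p' k' p k -> cw N A p <= cw N A p'.
Proof. by case/orP => [/ltW // | /andP [/eqP -> _]]. Qed.

Lemma cb_lt p' k' p k : (rk N p < rk N p')%N -> chunk_before N A p' k' p k ->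
  cw N A p < cw N A p'.
Proof.
move=> hr; case/orP => // /andP [_ /orP [h|/andP [/eqP e _]]]; first lia.
by subst p'; rewrite ltnn in hr.
Qed.

Lemma cb_same p k' k : chunk_before N A p k' p k -> (k' < k)%N.
Proof.
case/orP; first by rewrite ltxx.
by case/andP => _ /orP [|/andP [_ ->]] //; rewrite ltnn.
Qed.

Lemma SA c : (\sum_(c' : C | valid c') ((c'.1 == c.1) && blk c' c) <= c.2)%N.
Proof.
apply: (@leq_trans (\sum_(c' : C) ((c'.1 == c.1) && (c'.2 < c.2)))%N).
  rewrite big_mkcond; apply: leq_sum => c' _.
  case: (valid c') => //=; case: (eqVneq c'.1 c.1) => [e|] //=.
  case hb: (blk c' c) => //=; move: hb => /and4P [_ _ _].
  by case: c' e => p' k' /= ->; move/cb_same => ->.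
have -> : (\sum_(c' : C) ((c'.1 == c.1) && (c'.2 < c.2)) =
   \sum_(p : P) \sum_(j : 'I_K) ((p == c.1) && (j < c.2)))%N by rewrite pair_bigA.
rewrite (bigD1 c.1) //= [X in (_ + X)%N]big1 ?addn0; last first.
  by move=> p hp; rewrite big1 // => j _; rewrite (negbTE hp).
rewrite (eq_bigr (fun j : 'I_K => (j < c.2)%N : nat)); last by move=> j _; rewrite eqxx.
by rewrite sum_ltk geq_minr.
Qed.

Lemma SB c : valid c ->
  (\sum_(c' : C | valid c') ((rk N c'.1 < rk N c.1)%N && blk c' c) <= Hcount N A c.1 (ed c.1))%N.
Proof.
move=> hc; rewrite /Hcount.
rewrite (sumC addn (fun p' => (rk N p' < rk N c.1)%N)
   (fun p' k => if [&& (rls N c.1 <= tx A p' k)%N, adj_dec A p' (ed c.1)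
            & wt N c.1 / (dE N (ed c.1))%:R <= cw N A p'] then 1%N else 0%N)).
rewrite big_mkcond [X in (_ <= X)%N]big_mkcond; apply: leq_sum => c' _.
rewrite andbC; case: (valid c') => //=; case hr: (rk N c'.1 < rk N c.1)%N => /=; last by rewrite andbF.
case hb: (blk c' c) => //=; move: hb => /and4P [h1 _ h3 h4].
by rewrite h1 h3 -(cw_eq (validSome hc)) (cb_le h4).
Qed.

Lemma SC c' : valid c' ->
  \sum_(c : C | valid c) cw N A c.1 * (((rk N c.1 < rk N c'.1)%N && blk c' c : nat)%:R)
  <= WL N A c'.1 (ed c'.1).
Proof.
move=> hc'; rewrite /WL.
rewrite (sumC _ (fun p => (rk N p < rk N c'.1)%N)
   (fun p k => if [&& (rls N c'.1 <= tx A p k)%N, adj_dec A p (ed c'.1)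
            & cw N A p < wt N c'.1 / (dE N (ed c'.1))%:R] then cw N A p else 0)).
rewrite big_mkcond [X in (_ <= X)]big_mkcond; apply: ler_sum => c _.
rewrite andbC; case hv': (valid c) => //=; case hr: (rk N c.1 < rk N c'.1)%N => //=; last first.
  by rewrite andbF mulr0.
rewrite andbT; case hb: (blk c' c) => /=; last first.
  by rewrite mulr0; case: ifP => // _; exact: cw_ge0.
move: hb => /and4P [h1 h2 h3 h4].
have [hr' _] := valid_sched hc'.
rewrite mulr1 ifT //; apply/and3P; split.
- by apply: ltnW; apply: leq_ltn_trans h2.
- move: h3; rewrite /adj_dec (validSome hc') (validSome hv') adjC //.
- by rewrite -(cw_eq (validSome hc')); exact: (cb_lt hr h4).
Qed.


Lemma waitR : \sum_(c : C | valid c) cw N A c.1 * (txc c - rls N c.1)%:R <=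
  \sum_(c : C | valid c) (cw N A c.1 * (c.2 : nat)%:R
     + cw N A c.1 * (Hcount N A c.1 (ed c.1))%:R + WL N A c.1 (ed c.1)).
Proof.
apply: (@le_trans _ _ (\sum_(c : C | valid c) \sum_(c' : C | valid c')
           cw N A c.1 * (blk c' c : nat)%:R)).
  apply: ler_sum => c hc; rewrite -mulr_sumr -natr_sum.
  by apply: (ler_wpM2l (cw_ge0 _)); rewrite ler_nat; exact: waitB.
have hsplit : forall c c' : C, cw N A c.1 * (blk c' c : nat)%:R =
   cw N A c.1 * ((c'.1 == c.1) && blk c' c : nat)%:R
   + cw N A c.1 * (((rk N c'.1 < rk N c.1)%N && blk c' c) : nat)%:R
   + cw N A c.1 * (((rk N c.1 < rk N c'.1)%N && blk c' c) : nat)%:R.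
  move=> c c'; case: (blk c' c); rewrite ?andbF ?andbT ?mulr0 ?addr0 //.
  case: (eqVneq c'.1 c.1) => [->|hne]; first by rewrite ltnn /= mulr0 !addr0.
  have : rk N c'.1 != rk N c.1 by apply: contra hne => /eqP /rk_inj ->.
  by case: (ltngtP (rk N c'.1) (rk N c.1)) => //= _ _; rewrite ?mulr0 ?addr0 ?add0r.
under eq_bigr => c _ do under eq_bigr => c' _ do rewrite hsplit.
under eq_bigr => c _ do rewrite !big_split /=.
rewrite !big_split /=.
apply: lerD; first apply: lerD.
- apply: ler_sum => c hc; rewrite -mulr_sumr -natr_sum.
  by apply: (ler_wpM2l (cw_ge0 _)); rewrite ler_nat; exact: SA.
- apply: ler_sum => c hc; rewrite -mulr_sumr -natr_sum.
  by apply: (ler_wpM2l (cw_ge0 _)); rewrite ler_nat; exact: SB.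
- rewrite exchange_big /=; apply: ler_sum => c' hc'; exact: SC.
Qed.


Definition ap (p : P) : R :=
  match dec A p with Some e => imp N A p e | None => wt N p * (ellp N p)%:R end.

Lemma sumCT (F : P -> nat -> R) :
  \sum_(p : P) \sum_(k < nch N A p) F p k = \sum_(c : C | valid c) F c.1 c.2.
Proof. by rewrite (sumC _ xpredT F). Qed.

Lemma finE c : valid c ->
  (fin N A c.1 c.2)%:R - (rls N c.1)%:R =
  (1 + dST N (ed c.1).1 + dRD N (ed c.1).2)%:R + (txc c - rls N c.1)%:R :> R.
Proof.
move=> hc; have [hr _] := valid_sched hc.
rewrite /fin (validSome hc) natrB // -/(txc c).
rewrite !natrD; ring.
Qed.

Lemma F1 : ALGcost N A <= \sum_(p : P) ap p.
Proof.
rewrite /ALGcost (sumCT (fun p k => cw N A p * ((fin N A p k)%:R - (rls N p)%:R))).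
under [X in _ + X]eq_bigr => c hc do rewrite (finE hc) mulrDr.
rewrite big_split /=.
apply: (@le_trans _ _ (\sum_(p | dec A p == None) wt N p * (ellp N p)%:R +
   (\sum_(c : C | valid c) cw N A c.1 * (1 + dST N (ed c.1).1 + dRD N (ed c.1).2)%:R +
    \sum_(c : C | valid c) (cw N A c.1 * (c.2 : nat)%:R
     + cw N A c.1 * (Hcount N A c.1 (ed c.1))%:R + WL N A c.1 (ed c.1))))).
  by apply: lerD => //; apply: lerD => //; exact: waitR.
rewrite -big_split /= -(sumCT (fun p k => cw N A p * (1 + dST N (ed p).1 + dRD N (ed p).2)%:R
     + (cw N A p * k%:R + cw N A p * (Hcount N A p (ed p))%:R + WL N A p (ed p)))).
rewrite big_mkcond -big_split /=; apply: ler_sum => p _.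
rewrite /ap; case hd: (dec A p) => [e|] /=; last first.
  by rewrite /nch hd big_ord0 addr0.
rewrite add0r /nch hd /ed hd /=.
rewrite !big_split /= !sumr_const card_ord -!mulr_sumr.
have hd1 : (1 <= dE N e)%N := dE_pos (dec_in hd).
have hdz : (dE N e)%:R != 0 :> R by rewrite pnatr_eq0 -lt0n.
set d : R := (dE N e)%:R.
have hm : forall x : R, x *+ dE N e = x * d by move=> x; rewrite -mulr_natr.
rewrite !hm.
set s := \sum_(i < dE N e) (i%:R : R).
have hs : s = d * (d - 1) / 2.
  have h2 := sum_natr_id R (dE N e); rewrite -/s -/d in h2.
  by rewrite -h2 mulfK // pnatr_eq0.
rewrite hs (cw_eq hd) /imp -/d !natrD.
set h : R := (Hcount N A p e)%:R; set wl := WL N A p e.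
set a : R := (dST N e.1)%:R; set b : R := (dRD N e.2)%:R.
set w := wt N p.
rewrite le_eqVlt; apply/orP; left; apply/eqP.
by field.

Qed.


Lemma div_le (w d x : R) : 0 < d -> (w / d <= x) = (w <= d * x).
Proof. by move=> hd; rewrite mulrC ler_pdivrMl. Qed.

Lemma div_lt (w d x : R) : 0 < d -> (x < w / d) = (d * x < w).
Proof. by move=> hd; rewrite mulrC ltr_pdivlMl. Qed.

Definition B1 (t : T) (tau : nat) : R :=
  \sum_(c : C | valid c) (if (rls N c.1 <= tau <= txc c)%N && on1 c.1 t then cw N A c.1 else 0).
Definition B2 (r : Rv) (tau : nat) : R :=
  \sum_(c : C | valid c) (if (rls N c.1 <= tau <= txc c)%N && on2 c.1 r then cw N A c.1 else 0).

Lemma adj_split p e : adj_dec A p e = on1 p e.1 || on2 p e.2.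
Proof. by rewrite /adj_dec /on1 /on2; case: (dec A p). Qed.

Lemma sum_le1 (Q : pred C) :
  (forall c1 c2, valid c1 -> valid c2 -> Q c1 -> Q c2 -> c1 = c2) ->
  (\sum_(c : C | valid c) (Q c : nat) <= 1)%N.
Proof.
move=> hQ.
rewrite (eq_bigr (fun c => if Q c then 1%N else 0%N)) //.
rewrite -big_mkcondr sum1dep_card.
apply/card_le1_eqP => c1 c2; rewrite !inE => /andP [v1 q1] /andP [v2 q2].
exact: hQ.
Qed.

Lemma atmost1_1 s t : (\sum_(c : C | valid c) ((txc c == s) && on1 c.1 t) <= 1)%N.
Proof.
apply: sum_le1 => c1 c2 v1 v2 /andP [/eqP h1 o1] /andP [/eqP h2 o2].
apply: no_two => //; first by rewrite h1 h2.
move: o1 o2; rewrite /on1 /adjacent (validSome v1) (validSome v2) /=.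
by move=> /eqP -> /eqP ->; rewrite eqxx.
Qed.

Lemma atmost1_2 s r : (\sum_(c : C | valid c) ((txc c == s) && on2 c.1 r) <= 1)%N.
Proof.
apply: sum_le1 => c1 c2 v1 v2 /andP [/eqP h1 o1] /andP [/eqP h2 o2].
apply: no_two => //; first by rewrite h1 h2.
move: o1 o2; rewrite /on2 /adjacent (validSome v1) (validSome v2) /=.
by move=> /eqP -> /eqP ->; rewrite eqxx orbT.
Qed.

Lemma done_count (r tau : nat) e :
  (\sum_(c : C | valid c) ((r <= txc c < tau)%N && adj_dec A c.1 e) <= 2 * (tau - r))%N.
Proof.
apply: (@leq_trans (\sum_(c : C | valid c) \sum_(r <= s < tau)
           ((txc c == s) && adj_dec A c.1 e))%N).
  apply: leq_sum => c _; case: (adj_dec A c.1 e); last by rewrite andbF.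
  rewrite andbT (eq_bigr (fun s => (txc c == s) : nat)); last by move=> s _; rewrite andbT.
  by rewrite sum_nat_eq1.
rewrite exchange_big /=.
apply: (@leq_trans (\sum_(r <= s < tau) 2)%N); last by rewrite sum_nat_const_nat mulnC.
apply: leq_sum => s _.
apply: (@leq_trans (\sum_(c : C | valid c) ((txc c == s) && on1 c.1 e.1)
                   + \sum_(c : C | valid c) ((txc c == s) && on2 c.1 e.2))%N).
  rewrite -big_split /=; apply: leq_sum => c _.
  by rewrite adj_split; case: (txc c == s); case: (on1 _ _); case: (on2 _ _).
by rewrite -[2%N]/(1 + 1)%N; apply: leq_add; [exact: atmost1_1 | exact: atmost1_2].
Qed.

Lemma ap_le_imp p e : e \in Ep N p -> ap p <= imp N A p e.
Proof.
move=> he; case: hA => /(_ p) + _; rewrite /dec_ok /ap.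
case: (dec A p) => [e1 [_ hmin _]|[e1 [he1 hmin _ hl]]]; first exact: hmin.
exact: le_trans hl (hmin _ he).
Qed.


Lemma pw (w d cw : R) (b1 b2 ba : bool) : 0 < d -> 0 <= cw -> 0 < w ->
  w * ((if [&& b1, ba & w / d <= cw] then 1%N else 0%N)%:R)
  + d * (if [&& b1, ba & cw < w / d] then cw else 0)
  <= w * (((b1 && b2) && ba : nat)%:R) + d * (if (~~ b2) && ba then cw else 0).
Proof.
move=> hd hc hw; rewrite div_le // div_lt //.
have hx : 0 <= d * cw by rewrite mulr_ge0 // ltW.
case: b1; case: b2; case: ba => /=; case: (leP w (d * cw)) => h /=;
  rewrite ?mulr0 ?mulr1 ?addr0 ?add0r //; lra.
Qed.

Lemma nonneg_pw (w d cw : R) (b b' : bool) : 0 <= d -> 0 <= cw -> 0 <= w ->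
  0 <= w * ((b : nat)%:R) + d * (if b' then cw else 0).
Proof.
move=> hd hc hw; apply: addr_ge0; first by rewrite mulr_ge0 // ler0n.
by case: b'; rewrite ?mulr0 // mulr_ge0.
Qed.

Lemma fin_real (w a b d s B : R) : 0 < w -> 0 <= a -> 0 <= b -> 1 <= d -> 0 <= s ->
  w * (a + (d + 1) / 2 + b) + (w * (2 * s) + d * B) <= 2 * w * (s + a + d + b) + d * B.
Proof.
move=> hw ha hb hd hs.
have : w * (a + (d + 1) / 2 + b + 2 * s) <= w * (2 * (s + a + d + b)).
  by apply: ler_wpM2l; [exact: ltW | lra].
lra.
Qed.

Lemma F2 p e tau : e \in Ep N p -> (rls N p <= tau)%N ->
  ap p <= 2 * wt N p * ((tau + Delta N e)%:R - (rls N p)%:R)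
          + (dE N e)%:R * (B1 e.1 tau + B2 e.2 tau).
Proof.
move=> he hpt; apply: le_trans (ap_le_imp he) _.
have hd1 : (1 <= dE N e)%N := dE_pos he.
set d : R := (dE N e)%:R.
have hd0 : 0 < d by rewrite ltr0n.
have hw := wt_gt0 p; set w := wt N p.
have hk : w * (Hcount N A p e)%:R + d * WL N A p e <=
   w * (\sum_(c : C | valid c) ((rls N p <= txc c < tau)%N && adj_dec A c.1 e) : nat)%:R
   + d * \sum_(c : C | valid c)
       (if ((rls N c.1 <= tau <= txc c)%N && adj_dec A c.1 e) then cw N A c.1 else 0).
  rewrite /Hcount /WL.
  rewrite (sumC addn (fun p' => (rk N p' < rk N p)%N)
   (fun p' k => if [&& (rls N p <= tx A p' k)%N, adj_dec A p' e
            & wt N p / (dE N e)%:R <= cw N A p'] then 1%N else 0%N)).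
  rewrite (sumC _ (fun p' => (rk N p' < rk N p)%N)
   (fun p' k => if [&& (rls N p <= tx A p' k)%N, adj_dec A p' e
            & cw N A p' < wt N p / (dE N e)%:R] then cw N A p' else 0)).
  rewrite !natr_sum !mulr_sumr -!big_split /=.
  rewrite big_mkcond [X in (_ <= X)]big_mkcond; apply: ler_sum => c _.
  rewrite andbC; case hv': (valid c) => /=; last by [].
  case hr: (rk N c.1 < rk N p)%N => /=; last first.
    by apply: nonneg_pw; [exact: ltW | exact: cw_ge0 | exact: ltW].
  have hrl := rk_rls hr.
  have hct : (rls N c.1 <= tau)%N by apply: leq_trans hpt.
  rewrite hct /=.
  have := @pw w d (cw N A c.1) (rls N p <= txc c)%N (txc c < tau)%N (adj_dec A c.1 e) hd0 (cw_ge0 _) hw.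
  by rewrite -leqNgt.
apply: (@le_trans _ _ (w * ((dST N e.1)%:R + (d + 1) / 2 + (dRD N e.2)%:R)
     + (w * (2 * (tau - rls N p)%:R) + d * (B1 e.1 tau + B2 e.2 tau)))).
  rewrite /imp -/d -/w -addrA lerD2l; apply: le_trans hk _.
  apply: lerD.
    apply: ler_wpM2l; first exact: ltW.
    by rewrite -natrM ler_nat; exact: done_count.
  apply: ler_wpM2l; first exact: ltW.
  rewrite /B1 /B2 -big_split /=; apply: ler_sum => c _.
  rewrite adj_split; case: (rls N c.1 <= tau <= txc c)%N => /=; last by rewrite addr0.
  case: (on1 c.1 e.1); case: (on2 c.1 e.2) => /=; rewrite ?addr0 ?add0r //.
  by rewrite lerDl; exact: cw_ge0.
have -> : (tau + Delta N e)%:R - (rls N p)%:R =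
          (tau - rls N p)%:R + (dST N e.1)%:R + d + (dRD N e.2)%:R :> R.
  rewrite /Delta (natrB _ hpt) !natrD -/d; ring.
apply: fin_real => //; rewrite ?ler0n //.
by rewrite /d ler1n.
Qed.


Lemma sum_pick1 (I : finType) (i0 : I) (b : bool) (x : R) :
  \sum_(i : I) (if b && (i0 == i) then x else 0) = if b then x else 0.
Proof.
case: b => /=; last by rewrite big1.
rewrite (bigD1 i0) //= eqxx big1 ?addr0 // => i hi.
by rewrite eq_sym (negbTE hi).
Qed.

Lemma count_bound (H' : nat) (c : C) (x : R) : 0 <= x ->
  \sum_(tau < H'.+1) (if (rls N c.1 <= tau <= txc c)%N then x else 0)
  <= x * ((txc c - rls N c.1).+1)%:R.
Proof.
move=> hx.
rewrite (eq_bigr (fun tau : 'I_H'.+1 => x * ((rls N c.1 <= tau <= txc c)%N : nat)%:R)); last first.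
  by move=> i _; case: ifP; rewrite ?mulr1 ?mulr0.
rewrite -mulr_sumr -natr_sum; apply: ler_wpM2l => //.
rewrite ler_nat; apply: leq_trans (sum_count_le _ _ _) _; lia.
Qed.

Lemma F3a (H' : nat) : \sum_(tau < H'.+1) \sum_(t : T) B1 t tau <=
   \sum_(c : C | valid c) cw N A c.1 * ((txc c - rls N c.1).+1)%:R.
Proof.
rewrite /B1; under eq_bigr => tau _ do rewrite exchange_big /=.
rewrite exchange_big /=; apply: ler_sum => c hc.
under eq_bigr => tau _ do rewrite /on1 (validSome hc) sum_pick1.
by apply: count_bound; exact: cw_ge0.
Qed.

Lemma F3b (H' : nat) : \sum_(tau < H'.+1) \sum_(r : Rv) B2 r tau <=
   \sum_(c : C | valid c) cw N A c.1 * ((txc c - rls N c.1).+1)%:R.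
Proof.
rewrite /B2; under eq_bigr => tau _ do rewrite exchange_big /=.
rewrite exchange_big /=; apply: ler_sum => c hc.
under eq_bigr => tau _ do rewrite /on2 (validSome hc) sum_pick1.
by apply: count_bound; exact: cw_ge0.
Qed.

Lemma chunk_ge : \sum_(c : C | valid c) cw N A c.1 * ((txc c - rls N c.1).+1)%:R <= ALGcost N A.
Proof.
rewrite /ALGcost (sumCT (fun p k => cw N A p * ((fin N A p k)%:R - (rls N p)%:R))).
apply: (@le_trans _ _ (\sum_(c : C | valid c) cw N A c.1 * ((fin N A c.1 c.2)%:R - (rls N c.1)%:R))).
  apply: ler_sum => c hc; rewrite (finE hc); apply: ler_wpM2l; first exact: cw_ge0.
  by rewrite -natrD ler_nat; lia.
rewrite lerDr; apply: sumr_ge0 => p _; apply: mulr_ge0; last exact: ler0n.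
exact: ltW (wt_gt0 p).
Qed.

Lemma ap_ge0 p : 0 <= ap p.
Proof.
rewrite /ap; case: (dec A p) => [e|]; last by apply: mulr_ge0; [exact: ltW (wt_gt0 p) | exact: ler0n].
rewrite /imp; apply: addr_ge0; first apply: addr_ge0.
- apply: mulr_ge0; first exact: ltW (wt_gt0 p).
  by apply: addr_ge0; first apply: addr_ge0; rewrite ?ler0n // divr_ge0 // addr_ge0 ?ler0n.
- by apply: mulr_ge0; [exact: ltW (wt_gt0 p) | exact: ler0n].
- apply: mulr_ge0; first exact: ler0n.
  rewrite /WL; apply: sumr_ge0 => p' _; apply: sumr_ge0 => k _.
  by case: ifP => // _; exact: cw_ge0.
Qed.

Lemma ap_le_ell p : inPl N p -> ap p <= wt N p * (ellp N p)%:R.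
Proof.
move=> hp; case: hA => /(_ p) + _; rewrite /dec_ok /ap.
case: (dec A p) => [e [_ _ hn]|[e1 _]] //.
by rewrite leNgt; apply/negP => h; apply: hn; split => //; exact: ltW.
Qed.


Lemma reorg (Hz : nat) (f : P -> T * Rv -> nat -> R) :
  \sum_(p : P) \sum_(e in Ep N p) \sum_(rls N p <= tau < Hz.+1) f p e tau =
  \sum_(tau < Hz.+1) \sum_(t : T) \sum_(rv : Rv)
     \sum_(p | (rls N p <= tau)%N && ((t, rv) \in Ep N p)) f p (t, rv) tau.
Proof.
have -> : \sum_(p : P) \sum_(e in Ep N p) \sum_(rls N p <= tau < Hz.+1) f p e tau =
  \sum_(p : P) \sum_(e : T * Rv) \sum_(tau < Hz.+1)
     (if (e \in Ep N p) && (rls N p <= tau)%N then f p e tau else 0).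
  apply: eq_bigr => p _; rewrite big_mkcond; apply: eq_bigr => e _.
  case: (e \in Ep N p) => /=; last by rewrite big1.
  by rewrite big_geq_mkord big_mkcond.
under eq_bigr => p _ do rewrite exchange_big.
rewrite exchange_big /=; apply: eq_bigr => tau _.
rewrite exchange_big /= (pair_bigA _ (fun t rv => \sum_(p | (rls N p <= tau)%N && ((t, rv) \in Ep N p)) f p (t, rv) tau)) /=.
apply: eq_bigr => -[t rv] _ /=; rewrite [RHS]big_mkcond; apply: eq_bigr => p _.
by rewrite andbC.
Qed.

Lemma B1_ge0 t tau : 0 <= B1 t tau.
Proof. by apply: sumr_ge0 => c _; case: ifP => // _; exact: cw_ge0. Qed.
Lemma B2_ge0 r tau : 0 <= B2 r tau.
Proof. by apply: sumr_ge0 => c _; case: ifP => // _; exact: cw_ge0. Qed.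

Lemma cap1 (eps : R) (Hz : nat) (x : P -> T * Rv -> nat -> R) (y : P -> R) :
  LPfeasible N eps Hz x y ->
  \sum_(p : P) \sum_(e in Ep N p) \sum_(rls N p <= tau < Hz.+1)
     x p e tau * (dE N e)%:R * B1 e.1 tau
  <= \sum_(tau < Hz.+1) \sum_(t : T) B1 t tau * (1 / (2 + eps)).
Proof.
case=> _ _ _ _ [hc _].
rewrite (reorg Hz (fun p e tau => x p e tau * (dE N e)%:R * B1 e.1 tau)).
apply: ler_sum => tau _; apply: ler_sum => t _.
have -> : \sum_(rv : Rv) \sum_(p | (rls N p <= tau)%N && ((t, rv) \in Ep N p))
     x p (t, rv) tau * (dE N (t, rv))%:R * B1 (t, rv).1 tau =
   B1 t tau * \sum_(rv : Rv) \sum_(p | (rls N p <= tau)%N && ((t, rv) \in Ep N p))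
     (dE N (t, rv))%:R * x p (t, rv) tau.
  rewrite mulr_sumr; apply: eq_bigr => rv _; rewrite mulr_sumr; apply: eq_bigr => p _ /=.
  by rewrite mulrC [x p _ _ * _]mulrC.
apply: ler_wpM2l; first exact: B1_ge0.
by apply: hc; rewrite -ltnS.
Qed.

Lemma cap2 (eps : R) (Hz : nat) (x : P -> T * Rv -> nat -> R) (y : P -> R) :
  LPfeasible N eps Hz x y ->
  \sum_(p : P) \sum_(e in Ep N p) \sum_(rls N p <= tau < Hz.+1)
     x p e tau * (dE N e)%:R * B2 e.2 tau
  <= \sum_(tau < Hz.+1) \sum_(r : Rv) B2 r tau * (1 / (2 + eps)).
Proof.
case=> _ _ _ _ [_ hc].
rewrite (reorg Hz (fun p e tau => x p e tau * (dE N e)%:R * B2 e.2 tau)).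
apply: ler_sum => tau _; rewrite exchange_big /=; apply: ler_sum => rv _.
have -> : \sum_(t : T) \sum_(p | (rls N p <= tau)%N && ((t, rv) \in Ep N p))
     x p (t, rv) tau * (dE N (t, rv))%:R * B2 (t, rv).2 tau =
   B2 rv tau * \sum_(t : T) \sum_(p | (rls N p <= tau)%N && ((t, rv) \in Ep N p))
     (dE N (t, rv))%:R * x p (t, rv) tau.
  rewrite mulr_sumr; apply: eq_bigr => t _; rewrite mulr_sumr; apply: eq_bigr => p _ /=.
  by rewrite mulrC [x p _ _ * _]mulrC.
apply: ler_wpM2l; first exact: B2_ge0.
by apply: hc; rewrite -ltnS.
Qed.


Definition Phi (Hz : nat) (F : P -> T * Rv -> nat -> R) : R :=
  \sum_(p : P) \sum_(e in Ep N p) \sum_(rls N p <= tau < Hz.+1) F p e tau.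

Lemma Phi_add Hz F G : Phi Hz (fun p e tau => F p e tau + G p e tau) = Phi Hz F + Phi Hz G.
Proof.
rewrite /Phi -big_split; apply: eq_bigr => p _; rewrite -big_split; apply: eq_bigr => e _.
by rewrite -big_split.
Qed.

Lemma Phi_scale Hz F c : Phi Hz (fun p e tau => F p e tau * c) = Phi Hz F * c.
Proof.
rewrite /Phi mulr_suml; apply: eq_bigr => p _; rewrite mulr_suml; apply: eq_bigr => e _.
by rewrite mulr_suml.
Qed.

Lemma Phi_le Hz F G : (forall p e tau, e \in Ep N p -> (rls N p <= tau <= Hz)%N -> F p e tau <= G p e tau) ->
  Phi Hz F <= Phi Hz G.
Proof.
move=> h; apply: ler_sum => p _; apply: ler_sum => e he; apply: ler_sum_nat => tau htau.
by apply: h => //; rewrite -ltnS.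
Qed.

Lemma main_real (eps : R) (Hz : nat) x y : 0 < eps -> LPfeasible N eps Hz x y ->
  ALGcost N A <= 2 * (2 / eps + 1) * LPobj N Hz x y.
Proof.
move=> heps hf; have hf' := hf; case: hf' => hx hy hcov1 hcov2 _.
set X := \sum_(tau < Hz.+1) \sum_(t : T) B1 t tau.
set Y := \sum_(tau < Hz.+1) \sum_(r : Rv) B2 r tau.
set q := ALGcost N A.
have hX : X <= q := le_trans (F3a Hz) chunk_ge.
have hY : Y <= q := le_trans (F3b Hz) chunk_ge.
have hq : q <= \sum_p ap p := F1.
have hS1 : Phi Hz (fun p e tau => x p e tau * (dE N e)%:R * B1 e.1 tau) <= X * (1 / (2 + eps)).
  by apply: le_trans (cap1 hf) _; rewrite /X mulr_suml; apply: ler_sum => tau _; rewrite mulr_suml.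
have hS2 : Phi Hz (fun p e tau => x p e tau * (dE N e)%:R * B2 e.2 tau) <= Y * (1 / (2 + eps)).
  by apply: le_trans (cap2 hf) _; rewrite /Y mulr_suml; apply: ler_sum => tau _; rewrite mulr_suml.
set first := Phi Hz (fun p e tau => wt N p * x p e tau * ((tau + Delta N e)%:R - (rls N p)%:R)).
set second := \sum_(p | inPl N p) wt N p * (ellp N p)%:R * y p.
have hLP : LPobj N Hz x y = first + second by [].
have h1 : Phi Hz (fun p e tau => x p e tau * (ap p / 2)) <=
    first + (Phi Hz (fun p e tau => x p e tau * (dE N e)%:R * B1 e.1 tau)
          + Phi Hz (fun p e tau => x p e tau * (dE N e)%:R * B2 e.2 tau)) * (1 / 2).
  rewrite -Phi_add -Phi_scale -Phi_add; apply: Phi_le => p e tau he /andP [h1 h2].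
  have hF := F2 he h1.
  have hx0 := hx p e tau he (introT andP (conj h1 h2)).
  set g := (tau + Delta N e)%:R - (rls N p)%:R in hF *.
  set b1 := B1 e.1 tau in hF *; set b2 := B2 e.2 tau in hF *.
  set dd : R := (dE N e)%:R in hF *.
  have : x p e tau * (ap p) <= x p e tau * (2 * wt N p * g + dd * (b1 + b2)).
    exact: ler_wpM2l.
  move=> hh; rewrite -(mulr1 (x p e tau * _)) in hh *.
  have -> : x p e tau * (ap p / 2) = (x p e tau * ap p) * (1 / 2) by rewrite mulrA mul1r.
  have -> : wt N p * x p e tau * g + (x p e tau * dd * b1 + x p e tau * dd * b2) * (1 / 2)
     = (x p e tau * (2 * wt N p * g + dd * (b1 + b2))) * (1 / 2) by field.
  rewrite mulr1 in hh; apply: ler_wpM2r => //; lra.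
have hPhi : Phi Hz (fun p e tau => x p e tau * (ap p / 2)) = \sum_p ap p / 2 * sumx N Hz x p.
  rewrite /Phi /sumx; apply: eq_bigr => p _; rewrite mulr_sumr; apply: eq_bigr => e _.
  by rewrite mulr_sumr; apply: eq_bigr => tau _; rewrite mulrC.
have h2 : \sum_(p | inPl N p) ap p / 2 * y p <= second.
  apply: ler_sum => p hp; rewrite [_ * y p]mulrC [_ * y p]mulrC.
  apply: ler_wpM2l; first exact: hy.
  have := ap_le_ell hp; have := ap_ge0 p; lra.
have h3 : \sum_p ap p / 2 <= \sum_p ap p / 2 * sumx N Hz x p + \sum_(p | inPl N p) ap p / 2 * y p.
  rewrite [X in _ <= _ + X]big_mkcond -big_split /=; apply: ler_sum => p _.
  have ha : 0 <= ap p / 2 by have := ap_ge0 p; lra.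
  case hp: (inPl N p).
    rewrite -mulrDr -{1}(mulr1 (ap p / 2)); apply: ler_wpM2l => //; exact: hcov1.
  rewrite addr0 -{1}(mulr1 (ap p / 2)); apply: ler_wpM2l => //; apply: hcov2; by rewrite hp.
have hmain : q / 2 - q / (2 + eps) <= LPobj N Hz x y.
  rewrite hLP.
  have hsum : \sum_p ap p / 2 = (\sum_p ap p) / 2 by rewrite mulr_suml.
  have he2 : 0 < 2 + eps by lra.
  have hinv : 1 / (2 + eps) = (2 + eps)^-1 by rewrite mul1r.
  set I := (2 + eps)^-1 in hinv *.
  have hI : 0 < I by rewrite invr_gt0.
  have hqI : q / (2 + eps) = q * I by [].

  have hXI : X * I <= q * I by apply: ler_wpM2r => //; exact: ltW.
  have hYI : Y * I <= q * I by apply: ler_wpM2r => //; exact: ltW.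
  rewrite hinv in hS1 hS2.
  rewrite hPhi in h1.
  lra.
have he2 : 0 < 2 + eps by lra.
have hc : 0 <= 2 * (2 / eps + 1).
  by apply: mulr_ge0 => //; apply: addr_ge0 => //; apply: divr_ge0 => //; exact: ltW.
apply: le_trans (ler_wpM2l hc hmain).
rewrite le_eqVlt; apply/orP; left; apply/eqP.
field.
by apply/andP; split; [lra | lra].
Qed.

End Main.

Theorem mainTheorem1 (R : realType) (S T Rv D P : finType)
    (N : network R S T Rv D P) (A : run T Rv P) (eps : R) (H : nat) :
  valid_network N -> is_ALG_run N A ->
  0 < eps -> (forall p, (rls N p <= H)%N) ->
  ((ALGcost N A)%:E <= (2 * (2 / eps + 1))%:E * LPval N eps H)%E.
Proof.
move=> hv hA heps hH.
set c := 2 * (2 / eps + 1).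
have hc : 0 < c.
  by rewrite /c mulr_gt0 // ltr_wpDl // divr_ge0 // ltW.
have key : forall x y, LPfeasible N eps H x y -> ALGcost N A <= c * LPobj N H x y.
  move=> x y hf.
  case: (pickP (fun _ : T * Rv => true)) => [e0 _ | hnone].
    exact: (main_real hv hA e0 heps hf).
  have hP : forall p : P, False.
    by move=> p; case: hv => _ _ _ h _; case: (h p) => e _; have := hnone e.
  have -> : ALGcost N A = 0.
    by rewrite /ALGcost !big1 ?addr0 // => p; case: (hP p).
  have -> : LPobj N H x y = 0.
    by rewrite /LPobj !big1 ?addr0 // => p; case: (hP p).
  by rewrite mulr0.
have hb : ((ALGcost N A / c)%:E <= LPval N eps H)%E.
  apply/ereal_infP => z [x [y [hf ->]]]; rewrite lee_fin.
  by rewrite mulrC ler_pdivrMl //; exact: key.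
have -> : ALGcost N A = c * (ALGcost N A / c).
  by rewrite mulrC divfK // gt_eqF.
rewrite EFinM lee_pmul2l //; by rewrite lte_fin.
Qed.
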